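(* Let $A=(\alpha_n)_{n\in\mathbb{N}}$ and $B=(\beta_m)_{m\in\mathbb{N}}$ be sequences of positive real numbers with $\alpha_j\neq\alpha_\ell$ and $\beta_j\neq\beta_\ell$ for all $1\le j<\ell<\infty$, and set $\alpha_0=\beta_0=0$. Consider urn model I with these weights, and let $X_{n,m}$ be the number of white balls remaining when the process stops, started from $n$ white and $m$ black balls. Then for all $n,m\ge 1$ and $0\le k\le n$, \[ \mathbb{P}\{X_{n,m}=k\}=\Big(\prod_{h=1}^{m}\beta_h\Big)\Big(\prod_{h=k+1}^{n}\alpha_h\Big)\sum_{\ell=1}^{m}\frac{1}{\Big(\prod_{j=k}^{n}(\alpha_j+\beta_\ell)\Big)\Big(\prod_{\substack{i=1\\ i\neq\ell}}^{m}(\beta_i-\beta_\ell)\Big)} \] \[ =\Big(\prod_{h=1}^{m}\beta_h\Big)\Big(\prod_{h=k+1}^{n}\alpha_h\Big)\sum_{\ell=k}^{n}\frac{1}{\Big(\prod_{\substack{j=k\\ j\neq\ell}}^{n}(\alpha_j-\alpha_\ell)\Big)\Big(\prod_{i=1}^{m}(\beta_i+\alpha_\ell)\Big)}. \]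
   Context: Urn model I (sampling without replacement with general weights): an urn initially contains $n$ white and $m$ black balls. At each step, if the urn currently contains $n'$ white and $m'$ black balls, a white ball is drawn with probability $\alpha_{n'}/(\alpha_{n'}+\beta_{m'})$ and a black ball with probability $\beta_{m'}/(\alpha_{n'}+\beta_{m'})$; the drawn ball is discarded. The process stops as soon as one colour is exhausted. $X_{n,m}$ denotes the number of white balls in the urn when the process stops (so $X_{n,m}=0$ if the white balls are exhausted first, and otherwise it is the number of white balls left when all black balls have been drawn). Empty products equal $1$. *)

(* Defs.v *)
From mathcomp Require Import all_boot all_order all_algebra.
From mathcomp Require Import reals.
Set Implicit Arguments. Unset Strict Implicit. Unset Printing Implicit Defensive.
Import Order.TTheory GRing.Theory Num.Theory.
Local Open Scope ring_scope.

(* Law of X_{n,m} in urn model I, defined by first-step analysis of the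
   Markov chain (n', m') -> (n'-1, m') w.p. alpha n'/(alpha n'+beta m'),
   (n', m') -> (n', m'-1) w.p. beta m'/(alpha n'+beta m'),
   stopped as soon as n' = 0 or m' = 0.
   urnP alpha beta n m k = P{X_{n,m} = k}. *)
Fixpoint urnP (R : realType) (alpha beta : nat -> R) (n : nat) : nat -> nat -> R :=
  match n with
  | 0 => fun _ k => (k == 0%N)%:R
  | n'.+1 =>
      fix g (m : nat) : nat -> R :=
        match m with
        | 0 => fun k => (k == n'.+1)%:R
        | m'.+1 => fun k =>
            alpha n'.+1 / (alpha n'.+1 + beta m'.+1) * urnP alpha beta n' m'.+1 k
          + beta m'.+1 / (alpha n'.+1 + beta m'.+1) * g m' k
        end
  end.

(* Main.v *)
Require Import Defs.
From mathcomp Require Import all_boot all_order all_algebra.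
From mathcomp Require Import reals ring.
Import Order.TTheory GRing.Theory Num.Theory.
Local Open Scope ring_scope.

Lemma termL (F : fieldType) (y za zl p : F) :
  y + za != 0 -> y + zl != 0 -> za - zl != 0 ->
  ((y + zl) * ((za - zl) * p))^-1 =
  (y + za)^-1 * (((y + zl) * p)^-1 - ((- za + zl) * p)^-1).
Proof.
move=> h1 h2 h3; have [->|hp] := eqVneq p 0; first by rewrite !mulr0 invr0 subrr mulr0.
have h4 : - za + zl != 0 by rewrite addrC -opprB oppr_eq0.
by field; rewrite ?h1 ?h2 ?h3 ?h4 ?hp.
Qed.

Lemma Lfrac (F : fieldType) (s : seq nat) (z : nat -> F) (y : F) :
  uniq s -> s != [::] ->
  (forall i j, i \in s -> j \in s -> i != j -> z i != z j) ->
  (forall l, l \in s -> y + z l != 0) ->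
  \sum_(l <- s) ((y + z l) * \prod_(j <- s | j != l) (z j - z l))^-1 =
  (\prod_(j <- s) (y + z j))^-1.
Proof.
elim: s y => [//|a s IH] y /= /andP[anin us] _ hd hy.
have hds : forall i j, i \in s -> j \in s -> i != j -> z i != z j.
  by move=> i j hi hj; apply: hd; rewrite inE ?hi ?hj orbT.
case: (eqVneq s [::]) => [->|sne].
  by rewrite !big_cons !big_nil /= eqxx !mulr1 addr0.
rewrite big_cons [in RHS]big_cons.
have Pa : \prod_(j <- a :: s | j != a) (z j - z a) = \prod_(j <- s) (z j - z a).
  rewrite big_cons eqxx /= big_seq_cond [RHS]big_seq; apply: eq_bigl => j.
  by case: (boolP (j \in s)) => //= js; apply: contraNneq anin => <-.
rewrite Pa.
have E : forall l, l \in s ->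
  ((y + z l) * \prod_(j <- a :: s | j != l) (z j - z l))^-1 =
  (y + z a)^-1 * (((y + z l) * \prod_(j <- s | j != l) (z j - z l))^-1 -
     ((- z a + z l) * \prod_(j <- s | j != l) (z j - z l))^-1).
  move=> l ls; rewrite big_cons.
  have al : a != l by apply: contraNneq anin => ->.
  rewrite al; apply: termL.
  - by apply: hy; rewrite inE eqxx.
  - by apply: hy; rewrite inE ls orbT.
  - by rewrite subr_eq0; apply: hd; rewrite ?inE ?eqxx ?ls ?orbT.
rewrite (eq_big_seq _ E) -mulr_sumr sumrB IH //; last first.
  by move=> l ls; apply: hy; rewrite inE ls orbT.
rewrite IH //; last first.
  move=> l ls; rewrite addrC subr_eq0 eq_sym; apply: hd; rewrite ?inE ?eqxx ?ls ?orbT //.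
  by apply: contraNneq anin => ->.
have -> : \prod_(j <- s) (- z a + z j) = \prod_(j <- s) (z j - z a).
  by apply: eq_bigr => j _; rewrite addrC.
rewrite invfM; set u := (y + z a)^-1; set q := (\prod_(j <- s) (z j - z a))^-1.
by rewrite invfM -/u mulrBr addrC subrK.
Qed.

Lemma L0frac (F : fieldType) (s : seq nat) (z : nat -> F) :
  uniq s -> (2 <= size s)%N ->
  (forall i j, i \in s -> j \in s -> i != j -> z i != z j) ->
  \sum_(l <- s) (\prod_(j <- s | j != l) (z j - z l))^-1 = 0.
Proof.
case: s => [//|a s] /= /andP[anin us] hs hd.
have sne : s != [::] by case: s hs {anin us hd}.
rewrite big_cons.
have Pa : \prod_(j <- a :: s | j != a) (z j - z a) = \prod_(j <- s) (z j - z a).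
  rewrite big_cons eqxx /= big_seq_cond [RHS]big_seq; apply: eq_bigl => j.
  by case: (boolP (j \in s)) => //= js; apply: contraNneq anin => <-.
rewrite Pa.
have E : forall l, l \in s ->
  (\prod_(j <- a :: s | j != l) (z j - z l))^-1 =
  - ((- z a + z l) * \prod_(j <- s | j != l) (z j - z l))^-1.
  move=> l ls; rewrite big_cons.
  have al : a != l by apply: contraNneq anin => ->.
  by rewrite al -invrN -mulNr opprD opprK addrC.
rewrite (eq_big_seq _ E) sumrN Lfrac //.
- have -> : \prod_(j <- s) (- z a + z j) = \prod_(j <- s) (z j - z a).
    by apply: eq_bigr => j _; rewrite addrC.
  by rewrite subrr.
- by move=> i j hi hj; apply: hd; rewrite inE ?hi ?hj orbT.
- move=> l ls; rewrite addrC subr_eq0 eq_sym; apply: hd; rewrite ?inE ?eqxx ?ls ?orbT //.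
  by apply: contraNneq anin => ->.
Qed.

Lemma urnP_SS (R : realType) (a b : nat -> R) n m k :
  urnP a b n.+1 m.+1 k = a n.+1 / (a n.+1 + b m.+1) * urnP a b n m.+1 k
     + b m.+1 / (a n.+1 + b m.+1) * urnP a b n.+1 m k.
Proof. by []. Qed.

Lemma urnP_gt (R : realType) (a b : nat -> R) n m k :
  (n < k)%N -> urnP a b n m k = 0.
Proof.
elim: n m k => [|n IH] m k hk; first by case: k hk.
elim: m => [|m IHm]; first by rewrite /= gtn_eqF.
by rewrite urnP_SS IH ?(ltnW hk) // IHm !mulr0 addr0.
Qed.

Lemma urnP_nn (R : realType) (a b : nat -> R) n m
  (ha0 : a 0%N = 0) (hbpos : forall j : nat, (1 <= j)%N -> 0 < b j) :
  urnP a b n m n = (\prod_(1 <= h < m.+1) b h) *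
     (\prod_(1 <= i < m.+1) (a n + b i))^-1.
Proof.
case: n => [|n].
  rewrite /= ha0; under [X in _ / X]eq_bigr do rewrite add0r.
  rewrite divff //; rewrite big_nat prodf_seq_neq0; apply/allP => i.
  by move=> _; apply/implyP => /andP[hi _]; rewrite gt_eqF ?hbpos.
elim: m => [|m IHm]; first by rewrite /= eqxx !big_geq // invr1 mulr1.
rewrite urnP_SS urnP_gt // mulr0 add0r IHm (big_nat_recr m.+1) //= (big_nat_recr m.+1 1) //= invfM.
ring. Qed.

Lemma prod_recr_cond (F : fieldType) (P : pred nat) (G : nat -> F) a b :
  (a <= b)%N -> \prod_(a <= i < b.+1 | P i) G i =
  (\prod_(a <= i < b | P i) G i) * (if P b then G b else 1).
Proof. by move=> h; rewrite big_mkcond big_nat_recr // -big_mkcond. Qed.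

Lemma prodSl (F : fieldType) (G : nat -> F) a b :
  (a <= b)%N -> \prod_(a <= i < b.+1) G i = (\prod_(a <= i < b) G i) * G b.
Proof. by move=> h; rewrite big_nat_recr. Qed.

Lemma sumSl (F : fieldType) (G : nat -> F) a b :
  (a <= b)%N -> \sum_(a <= i < b.+1) G i = (\sum_(a <= i < b) G i) + G b.
Proof. by move=> h; rewrite big_nat_recr. Qed.

Arguments prodSl {F} G a b.
Arguments sumSl {F} G a b.

Lemma termT (F : fieldType) (e f u v D : F) :
  u != 0 -> v != 0 -> D != 0 -> u + v = D ->
  ((e * u) * (f * v))^-1 = D^-1 * ((e * (f * v))^-1 + ((e * u) * f)^-1).
Proof.
move=> hu hv hD hs; have [->|he] := eqVneq e 0; first by rewrite !mul0r invr0 addr0 mulr0.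
have [->|hf] := eqVneq f 0; first by rewrite !(mul0r, mulr0) invr0 addr0 mulr0.
rewrite -hs; field; rewrite ?hu ?hv ?he ?hf ?hs ?hD //.
Qed.

Definition T1 (R : realType) (alpha beta : nat -> R) (n m k : nat) : R :=
    (\prod_(1 <= h < m.+1) beta h) * (\prod_(k.+1 <= h < n.+1) alpha h) *
    \sum_(1 <= l < m.+1)
       ((\prod_(k <= j < n.+1) (alpha j + beta l)) *
        (\prod_(1 <= i < m.+1 | i != l) (beta i - beta l)))^-1.

Definition T2 (R : realType) (alpha beta : nat -> R) (n m k : nat) : R :=
    (\prod_(1 <= h < m.+1) beta h) * (\prod_(k.+1 <= h < n.+1) alpha h) *
    \sum_(k <= l < n.+1)
       ((\prod_(k <= j < n.+1 | j != l) (alpha j - alpha l)) *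
        (\prod_(1 <= i < m.+1) (beta i + alpha l)))^-1.

Arguments T1 {R} alpha beta n m k.
Arguments T2 {R} alpha beta n m k.

Lemma T1_step (R : realType) (alpha beta : nat -> R) n m k
  (hab : forall j l, (1 <= l)%N -> alpha j + beta l != 0)
  (hbd : forall l, (1 <= l)%N -> (l < m.+1)%N -> beta m.+1 - beta l != 0) :
  (k <= n)%N ->
  T1 alpha beta n.+1 m.+1 k =
    alpha n.+1 / (alpha n.+1 + beta m.+1) * T1 alpha beta n m.+1 k
  + beta m.+1 / (alpha n.+1 + beta m.+1) * T1 alpha beta n.+1 m k.
Proof.
move=> hk; rewrite /T1.
rewrite (prodSl beta) // (prodSl alpha (k.+1)) //.
set a := alpha n.+1; set b := beta m.+1.
set e := fun l => \prod_(k <= j < n.+1) (alpha j + beta l).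
set f := fun l => \prod_(1 <= i < m.+1 | i != l) (beta i - beta l).
set g := \prod_(1 <= i < m.+2 | i != m.+1) (beta i - beta m.+1).
have S1 : \sum_(1 <= l < m.+2) ((\prod_(k <= j < n.+2) (alpha j + beta l)) *
     \prod_(1 <= i < m.+2 | i != l) (beta i - beta l))^-1 =
   \sum_(1 <= l < m.+1) ((e l * (a + beta l)) * (f l * (b - beta l)))^-1
   + ((e m.+1 * (a + b)) * g)^-1.
  rewrite sumSl //; congr (_ + _); last by rewrite (prodSl (fun j => alpha j + beta m.+1) k n.+1 (leqW hk)).
  apply: eq_big_nat => l /andP[_ hl].
  by rewrite (prodSl (fun j => alpha j + beta l) k n.+1 (leqW hk)) (prod_recr_cond _ (fun i => i != l) (fun i => beta i - beta l) 1 m.+1) // gtn_eqF.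
have S2 : \sum_(1 <= l < m.+2) ((\prod_(k <= j < n.+1) (alpha j + beta l)) *
     \prod_(1 <= i < m.+2 | i != l) (beta i - beta l))^-1 =
   \sum_(1 <= l < m.+1) (e l * (f l * (b - beta l)))^-1
   + (e m.+1 * g)^-1.
  rewrite sumSl //; congr (_ + _).
  apply: eq_big_nat => l /andP[_ hl].
  by rewrite (prod_recr_cond _ (fun i => i != l) (fun i => beta i - beta l) 1 m.+1) // gtn_eqF.
have S4 : \sum_(1 <= l < m.+1) ((\prod_(k <= j < n.+2) (alpha j + beta l)) *
     \prod_(1 <= i < m.+1 | i != l) (beta i - beta l))^-1 =
   \sum_(1 <= l < m.+1) ((e l * (a + beta l)) * f l)^-1.
  by apply: eq_big_nat => l _; rewrite (prodSl (fun j => alpha j + beta l) k n.+1 (leqW hk)).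
rewrite S1 S2 S4.
have S3 : \sum_(1 <= l < m.+1) ((e l * (a + beta l)) * (f l * (b - beta l)))^-1 =
   (a + b)^-1 * (\sum_(1 <= l < m.+1) (e l * (f l * (b - beta l)))^-1 +
      \sum_(1 <= l < m.+1) ((e l * (a + beta l)) * f l)^-1).
  rewrite -big_split mulr_sumr; apply: eq_big_nat => l /andP[hl1 hl].
  apply: termT. all: try (by rewrite ?hab ?hbd). by ring.
rewrite S3.
have hD : a + b != 0 by rewrite /a /b hab.
set s1 := \sum_(1 <= l < m.+1) (e l * (f l * (b - beta l)))^-1.
set s2 := \sum_(1 <= l < m.+1) ((e l * (a + beta l)) * f l)^-1.
have -> : ((e m.+1 * (a + b)) * g)^-1 = (a + b)^-1 * (e m.+1 * g)^-1.
  by rewrite mulrAC invfM mulrC.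
set Y := (e m.+1 * g)^-1.
field; exact: hD.
Qed.

Lemma T2_step (R : realType) (alpha beta : nat -> R) n m k
  (hab : forall i l, (1 <= i)%N -> beta i + alpha l != 0)
  (had : forall l, (k <= l)%N -> (l < n.+1)%N -> alpha n.+1 - alpha l != 0) :
  (k <= n)%N ->
  T2 alpha beta n.+1 m.+1 k =
    alpha n.+1 / (alpha n.+1 + beta m.+1) * T2 alpha beta n m.+1 k
  + beta m.+1 / (alpha n.+1 + beta m.+1) * T2 alpha beta n.+1 m k.
Proof.
move=> hk; rewrite /T2.
rewrite (prodSl beta) // (prodSl alpha (k.+1)) //.
set a := alpha n.+1; set b := beta m.+1.
set c := fun l => \prod_(k <= j < n.+1 | j != l) (alpha j - alpha l).
set d := fun l => \prod_(1 <= i < m.+1) (beta i + alpha l).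
set C := \prod_(k <= j < n.+2 | j != n.+1) (alpha j - alpha n.+1).
have S1 : \sum_(k <= l < n.+2) ((\prod_(k <= j < n.+2 | j != l) (alpha j - alpha l)) *
     \prod_(1 <= i < m.+2) (beta i + alpha l))^-1 =
   \sum_(k <= l < n.+1) ((c l * (a - alpha l)) * (d l * (b + alpha l)))^-1
   + (C * (d n.+1 * (b + a)))^-1.
  rewrite (sumSl _ k n.+1 (leqW hk)); congr (_ + _); last by rewrite (prodSl (fun i => beta i + alpha n.+1) 1 m.+1).
  apply: eq_big_nat => l /andP[_ hl].
  by rewrite (prodSl (fun i => beta i + alpha l) 1 m.+1) // (prod_recr_cond _ (fun j => j != l) (fun j => alpha j - alpha l) k n.+1 (leqW hk)) gtn_eqF.
have S2 : \sum_(k <= l < n.+1) ((\prod_(k <= j < n.+1 | j != l) (alpha j - alpha l)) *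
     \prod_(1 <= i < m.+2) (beta i + alpha l))^-1 =
   \sum_(k <= l < n.+1) (c l * (d l * (b + alpha l)))^-1.
  by apply: eq_big_nat => l _; rewrite (prodSl (fun i => beta i + alpha l) 1 m.+1).
have S3 : \sum_(k <= l < n.+2) ((\prod_(k <= j < n.+2 | j != l) (alpha j - alpha l)) *
     \prod_(1 <= i < m.+1) (beta i + alpha l))^-1 =
   \sum_(k <= l < n.+1) ((c l * (a - alpha l)) * d l)^-1 + (C * d n.+1)^-1.
  rewrite (sumSl _ k n.+1 (leqW hk)); congr (_ + _).
  apply: eq_big_nat => l /andP[_ hl].
  by rewrite (prod_recr_cond _ (fun j => j != l) (fun j => alpha j - alpha l) k n.+1 (leqW hk)) gtn_eqF.
rewrite S1 S2 S3.
have hD : a + b != 0 by rewrite addrC /a /b hab.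
have S4 : \sum_(k <= l < n.+1) ((c l * (a - alpha l)) * (d l * (b + alpha l)))^-1 =
   (a + b)^-1 * (\sum_(k <= l < n.+1) (c l * (d l * (b + alpha l)))^-1 +
      \sum_(k <= l < n.+1) ((c l * (a - alpha l)) * d l)^-1).
  rewrite -big_split mulr_sumr; apply: eq_big_nat => l /andP[hl1 hl].
  apply: termT => //; [exact: had | exact: hab | ring].
rewrite S4.
have -> : (C * (d n.+1 * (b + a)))^-1 = (a + b)^-1 * (C * d n.+1)^-1.
  by rewrite mulrA invfM mulrC addrC.
set Y := (C * d n.+1)^-1.
set s1 := \sum_(k <= l < n.+1) (c l * (d l * (b + alpha l)))^-1.
set s2 := \sum_(k <= l < n.+1) ((c l * (a - alpha l)) * d l)^-1.
field; exact: hD.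
Qed.

Lemma urnP_S0 (R : realType) (a b : nat -> R) n k :
  urnP a b n.+1 0 k = (k == n.+1)%:R.
Proof. by []. Qed.


Lemma T1_nn (R : realType) (alpha beta : nat -> R) n m
  (ha : forall j, 0 <= alpha j) (hbpos : forall j : nat, (1 <= j)%N -> 0 < beta j)
  (hbd : forall i j, (1 <= i)%N -> (1 <= j)%N -> i != j -> beta i != beta j) :
  (1 <= m)%N ->
  T1 alpha beta n m n = (\prod_(1 <= h < m.+1) beta h) *
     (\prod_(1 <= i < m.+1) (alpha n + beta i))^-1.
Proof.
move=> hm; rewrite /T1 [X in _ * X * _]big_geq // mulr1.
under [X in _ * X = _]eq_bigr do rewrite big_nat1.
rewrite Lfrac //.
- exact: iota_uniq.
- by rewrite /index_iota subSS subn0; case: m hm.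
- by move=> i j; rewrite !mem_index_iota => /andP[hi _] /andP[hj _]; apply: hbd.
- move=> l; rewrite mem_index_iota => /andP[hl _].
  by rewrite gt_eqF // ltr_wpDl ?hbpos.
Qed.

Lemma T2_nn (R : realType) (alpha beta : nat -> R) n m :
  T2 alpha beta n m n = (\prod_(1 <= h < m.+1) beta h) *
     (\prod_(1 <= i < m.+1) (alpha n + beta i))^-1.
Proof.
rewrite /T2 [X in _ * X * _]big_geq // mulr1 big_nat1.
have -> : \prod_(n <= j < n.+1 | j != n) (alpha j - alpha n) = 1.
  by rewrite big_mkcond big_nat1 eqxx.
rewrite mul1r.
by congr (_ * (_ ^-1)); apply: eq_bigr => i _; rewrite addrC.
Qed.

Lemma main_all (R : realType) (alpha beta : nat -> R)
  (ha0 : alpha 0%N = 0)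
  (hapos : forall j : nat, (1 <= j)%N -> 0 < alpha j)
  (hbpos : forall j : nat, (1 <= j)%N -> 0 < beta j)
  (hainj : forall j l : nat, (1 <= j)%N -> (j < l)%N -> alpha j != alpha l)
  (hbinj : forall j l : nat, (1 <= j)%N -> (j < l)%N -> beta j != beta l) :
  forall n k, (k < n)%N -> forall m,
  urnP alpha beta n m k = T1 alpha beta n m k /\
  urnP alpha beta n m k = T2 alpha beta n m k.
Proof.
have ha : forall j, 0 <= alpha j.
  by case=> [|j]; rewrite ?ha0 // ltW ?hapos.
have had : forall i j, i != j -> alpha i != alpha j.
  move=> i j; case: (ltngtP i j) => // hij _.
  - case: i hij => [|i] hij; last exact: hainj.
    by rewrite ha0 lt_eqF ?hapos //; case: j hij.
  - case: j hij => [|j] hij; last by rewrite eq_sym; apply: hainj.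
    by rewrite ha0 gt_eqF ?hapos //; case: i hij.
have hbd : forall i j, (1 <= i)%N -> (1 <= j)%N -> i != j -> beta i != beta j.
  move=> i j hi hj; case: (ltngtP i j) => // hij _; first exact: hbinj.
  by rewrite eq_sym; apply: hbinj.
have hab : forall j l, (1 <= l)%N -> alpha j + beta l != 0.
  by move=> j l hl; rewrite gt_eqF // ltr_wpDl ?hbpos.
have hba : forall i l, (1 <= i)%N -> beta i + alpha l != 0.
  by move=> i l hi; rewrite addrC hab.
elim=> [//|n IH] k hk; elim=> [|m IHm].
  rewrite urnP_S0 ltn_eqF //; split.
    by rewrite /T1 [X in _ * X]big_geq // mulr0.
  rewrite /T2; under [X in _ * X]eq_bigr do rewrite [X in _ * X]big_geq // mulr1.
  rewrite L0frac ?mulr0 //.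
  - exact: iota_uniq.
  - by rewrite size_iota subSn ?(ltnW hk) // ltnS subn_gt0.
  - by move=> i j _ _; apply: had.
have E : urnP alpha beta n m.+1 k = T1 alpha beta n m.+1 k /\
         urnP alpha beta n m.+1 k = T2 alpha beta n m.+1 k.
  rewrite ltnS leq_eqVlt in hk; case/orP: hk => [/eqP ->|hk]; last exact: IH.
  by rewrite urnP_nn ?T1_nn ?T2_nn.
have hk' : (k <= n)%N by rewrite -ltnS.
rewrite urnP_SS; case: E => E1 E2; case: IHm => I1 I2; split.
  rewrite E1 I1 T1_step //.
  move=> l hl hlm; rewrite subr_eq0 eq_sym; apply: hbd => //.
  by rewrite neq_ltn hlm.
rewrite E2 I2 T2_step //.
by move=> l _ hl; rewrite subr_eq0; apply: had; rewrite neq_ltn hl orbT.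
Qed.

Theorem theorem1 (R : realType) (alpha beta : nat -> R)
  (ha0 : alpha 0%N = 0) (hb0 : beta 0%N = 0)
  (hapos : forall j : nat, (1 <= j)%N -> 0 < alpha j)
  (hbpos : forall j : nat, (1 <= j)%N -> 0 < beta j)
  (hainj : forall j l : nat, (1 <= j)%N -> (j < l)%N -> alpha j != alpha l)
  (hbinj : forall j l : nat, (1 <= j)%N -> (j < l)%N -> beta j != beta l)
  (n m k : nat) (hn : (1 <= n)%N) (hm : (1 <= m)%N) (hk : (k <= n)%N) :
  urnP alpha beta n m k =
    (\prod_(1 <= h < m.+1) beta h) * (\prod_(k.+1 <= h < n.+1) alpha h) *
    \sum_(1 <= l < m.+1)
       ((\prod_(k <= j < n.+1) (alpha j + beta l)) *
        (\prod_(1 <= i < m.+1 | i != l) (beta i - beta l)))^-1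
  /\
  urnP alpha beta n m k =
    (\prod_(1 <= h < m.+1) beta h) * (\prod_(k.+1 <= h < n.+1) alpha h) *
    \sum_(k <= l < n.+1)
       ((\prod_(k <= j < n.+1 | j != l) (alpha j - alpha l)) *
        (\prod_(1 <= i < m.+1) (beta i + alpha l)))^-1.
Proof.
rewrite leq_eqVlt in hk; case/orP: hk => [/eqP ->|hk].
  have ha : forall j, 0 <= alpha j by case=> [|j]; rewrite ?ha0 // ltW ?hapos.
  have hbd : forall i j, (1 <= i)%N -> (1 <= j)%N -> i != j -> beta i != beta j.
    move=> i j hi hj; case: (ltngtP i j) => // hij _; first exact: hbinj.
    by rewrite eq_sym; apply: hbinj.
  have := @T1_nn R alpha beta n m ha hbpos hbd hm; have := @T2_nn R alpha beta n m.
  rewrite /T1 /T2 => -> ->; rewrite urnP_nn //.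
have [h1 h2] := @main_all R alpha beta ha0 hapos hbpos hainj hbinj n k hk m.
by rewrite /T1 in h1; rewrite /T2 in h2; split.
Qed.
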